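(* Every solution of system (CSF) has bounded velocities: there is a constant $C<\infty$, depending only on the initial data and the parameters, such that $\max_i|\mathbf v_i(t)|\le C$ for all $t\ge0$.
   Context: Fix integers $N\ge1$, $n\ge1$, masses $m_1,\dots,m_N>0$ with $M=\sum_i m_i$, parameters $\sigma>0$, $p>0$, $\kappa\ge0$, and a communication kernel $\phi:[0,\infty)\to(0,\infty)$ that is smooth, positive and non-increasing. Write $\phi_{ij}=\phi(|\mathbf x_i-\mathbf x_j|)$, with $|\cdot|$ the Euclidean norm on $\mathbb R^n$. System (CSF) is, for $i=1,\dots,N$, $$\dot{\mathbf x}_i=\mathbf v_i,\qquad \dot{\mathbf v}_i=\sum_{j=1}^N m_j\phi_{ij}(\mathbf v_j-\mathbf v_i)+\sigma(\theta_i-|\mathbf v_i|^p)\mathbf v_i,\qquad \dot\theta_i=\kappa\sum_{j=1}^N m_j\phi_{ij}(\theta_j-\theta_i),$$ with $\mathbf x_i,\mathbf v_i\in\mathbb R^n$ and initial values $\theta_i(0)>0$; solutions are considered for $t\ge0$. *)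

(* Defs.v *)
From Stdlib Require Import Reals Lra.
From Coquelicot Require Import Coquelicot.
Open Scope R_scope.

Fixpoint sumN (N : nat) (f : nat -> R) : R :=
  match N with
  | O => 0
  | S k => sumN k f + f k
  end.

Definition vnorm (n : nat) (u : nat -> R) : R :=
  sqrt (sumN n (fun k => u k ^ 2)).

(* x^p for x >= 0 and p > 0, with the convention 0^p = 0
   (Stdlib's Rpower 0 p would be 1). *)
Definition rpow (x p : R) : R :=
  if Rle_dec x 0 then 0 else Rpower x p.

Definition right_cont_at0 (f : R -> R) : Prop :=
  forall eps, 0 < eps -> exists delta, 0 < delta /\
    forall t, 0 <= t < delta -> Rabs (f t - f 0) < eps.

(* Solution of system (CSF) on [0,oo): x i k t, v i k t = k-th coordinate
   of x_i(t), v_i(t); theta i t = theta_i(t).  The equations hold for t > 0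
   (classical derivatives) and all components are right-continuous at 0. *)
Definition CSF_solution (N n : nat) (m : nat -> R) (sigma p kappa : R)
  (phi : R -> R) (x v : nat -> nat -> R -> R) (theta : nat -> R -> R) : Prop :=
  (forall i k, (i < N)%nat -> (k < n)%nat ->
     right_cont_at0 (x i k) /\ right_cont_at0 (v i k)) /\
  (forall i, (i < N)%nat -> right_cont_at0 (theta i)) /\
  (forall i k t, (i < N)%nat -> (k < n)%nat -> 0 < t ->
     is_derive (x i k) t (v i k t)) /\
  (forall i k t, (i < N)%nat -> (k < n)%nat -> 0 < t ->
     is_derive (v i k) t
       (sumN N (fun j => m j * phi (vnorm n (fun l => x i l t - x j l t))
                          * (v j k t - v i k t))
        + sigma * (theta i t - rpow (vnorm n (fun l => v i l t)) p) * v i k t)) /\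
  (forall i t, (i < N)%nat -> 0 < t ->
     is_derive (theta i) t
       (kappa * sumN N (fun j => m j * phi (vnorm n (fun l => x i l t - x j l t))
                                  * (theta j t - theta i t)))).

(* Main.v *)
Require Import Defs.
From Stdlib Require Import Reals Lra Classical Lia.
From Coquelicot Require Import Coquelicot.
Open Scope R_scope.

Lemma sumN_ext N f g : (forall k, (k < N)%nat -> f k = g k) -> sumN N f = sumN N g.
Proof. induction N; simpl; intros H; [reflexivity|]. rewrite IHN by (intros; apply H; lia). rewrite H by lia. reflexivity. Qed.
Lemma sumN_plus N f g : sumN N (fun k => f k + g k) = sumN N f + sumN N g.
Proof. induction N; simpl; [lra|]. rewrite IHN; lra. Qed.
Lemma sumN_scal N c f : sumN N (fun k => c * f k) = c * sumN N f.
Proof. induction N; simpl; [lra|]. rewrite IHN; lra. Qed.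
Lemma sumN_swap N M (f : nat -> nat -> R) :
  sumN N (fun k => sumN M (fun j => f k j)) = sumN M (fun j => sumN N (fun k => f k j)).
Proof. induction N; simpl.
 - induction M; simpl; [lra|]. rewrite <- IHM; lra.
 - rewrite IHN. rewrite <- sumN_plus. reflexivity. Qed.
Lemma sumN_le N f g : (forall k, (k < N)%nat -> f k <= g k) -> sumN N f <= sumN N g.
Proof. induction N; simpl; intros H; [lra|]. assert (f N <= g N) by (apply H; lia).
 assert (sumN N f <= sumN N g) by (apply IHN; intros; apply H; lia). lra. Qed.
Lemma sumN_nonneg N f : (forall k, (k < N)%nat -> 0 <= f k) -> 0 <= sumN N f.
Proof. intros H. replace 0 with (sumN N (fun _ => 0)). apply sumN_le; auto.
 clear H; induction N; simpl; lra. Qed.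
Lemma sumN_nonpos N f : (forall k, (k < N)%nat -> f k <= 0) -> sumN N f <= 0.
Proof. intros H. replace 0 with (sumN N (fun _ => 0)). apply sumN_le; auto.
 clear H; induction N; simpl; lra. Qed.

Fixpoint maxN (N : nat) (f : nat -> R) : R :=
  match N with O => 0 | S k => Rmax (maxN k f) (f k) end.
Lemma maxN_ge N f i : (i < N)%nat -> f i <= maxN N f.
Proof. induction N; simpl; intros H; [lia|]. destruct (Nat.eq_dec i N).
 subst; apply Rmax_r. eapply Rle_trans; [apply IHN; lia| apply Rmax_l]. Qed.

Lemma derive_cont f x l : is_derive f x l ->
  forall eps, 0 < eps -> exists d, 0 < d /\ forall y, Rabs (y - x) < d -> Rabs (f y - f x) < eps.
Proof. intros H eps He. apply is_derive_Reals in H.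
 assert (Hc: continuity_pt f x) by (apply derivable_continuous_pt; exists l; exact H).
 destruct (Hc eps He) as [d [Hd Hd2]]. exists d; split; auto. intros y Hy.
 destruct (Req_dec y x). subst. replace (f x - f x) with 0 by ring. rewrite Rabs_R0; lra.
 apply (Hd2 y). split. split; [exact I| auto]. exact Hy. Qed.



Lemma fin_delta N (P : nat -> R -> Prop) :
  (forall i, (i < N)%nat -> exists d, 0 < d /\ forall y, Rabs y < d -> P i y) ->
  exists d, 0 < d /\ forall i y, (i < N)%nat -> Rabs y < d -> P i y.
Proof. induction N; intros H. exists 1; split; [lra| intros; lia].
 destruct IHN as [d [Hd Hd2]]. intros; apply H; lia.
 destruct (H N) as [e [He He2]]. lia.
 exists (Rmin d e). split. apply Rmin_pos; auto.
 intros i y Hi Hy. destruct (Nat.eq_dec i N). subst. apply He2.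
 eapply Rlt_le_trans; [apply Hy| apply Rmin_r].
 apply Hd2. lia. eapply Rlt_le_trans; [apply Hy| apply Rmin_l]. Qed.

Lemma deriv_left f T l e d : derivable_pt_lim f T l -> 0 < d ->
  (forall t, T - d < t < T -> f t - f T < e * (t - T)) -> e <= l.
Proof. intros H Hd Ht. destruct (Rle_or_lt e l) as [|Hl]; auto.
 destruct (H (e - l)) as [[d' Hd'] Hd2]. lra.
 set (h := - (Rmin d d') / 2).
 assert (Hmin: 0 < Rmin d d') by (apply Rmin_pos; auto).
 assert (h < 0) by (unfold h; lra).
 assert (Rabs h < d') by (unfold h; rewrite Rabs_left by lra; pose proof (Rmin_r d d'); simpl in *; lra).
 specialize (Hd2 h ltac:(lra) H1). simpl in Hd2.
 specialize (Ht (T + h)). assert (- h < d) by (unfold h; pose proof (Rmin_l d d'); lra).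
 specialize (Ht ltac:(lra)).
 assert ((f (T + h) - f T) / h > e).
 { apply Rmult_lt_reg_r with (- h). lra. unfold Rdiv.
   replace ((f (T + h) - f T) * / h * - h) with (-(f (T+h) - f T)) by (field; lra).
   replace (T + h - T) with h in Ht by ring. lra. }
 apply Rabs_def2 in Hd2. lra. Qed.


Lemma maxp N (g g' : nat -> R -> R) c K :
 (forall i, (i<N)%nat -> right_cont_at0 (g i)) ->
 (forall i t, (i<N)%nat -> 0<t -> is_derive (g i) t (g' i t)) ->
 (forall i t, (i<N)%nat -> 0<t -> c <= g i t -> (forall j, (j<N)%nat -> g j t <= g i t) -> g' i t <= 0) ->
 c <= K -> (forall i, (i<N)%nat -> g i 0 <= K) -> forall i t, (i<N)%nat -> 0<=t -> g i t <= K.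
Proof.
 intros Hrc Hd Hcond HcK H0.
 assert (Heps: forall eps, 0 < eps -> forall i t, (i<N)%nat -> 0<=t -> g i t - eps*t < K + eps).
 { intros eps He. apply NNPP. intro Hn.
   assert (Hex: exists i0 t0, (i0<N)%nat /\ 0<=t0 /\ K + eps <= g i0 t0 - eps*t0).
   { apply NNPP; intro Hn2; apply Hn; intros i t Hi Ht.
     apply Rnot_le_lt; intro; apply Hn2; exists i, t; auto. }
   destruct Hex as [i0 [t0 [Hi0 [Ht0 Hge]]]].
   set (E := fun s => 0 <= s /\ forall u i, 0 <= u <= s -> (i<N)%nat -> g i u - eps*u < K+eps).
   assert (HbE: bound E).
   { exists t0. intros s [Hs Hs2]. destruct (Rle_or_lt s t0); auto.
     specialize (Hs2 t0 i0 ltac:(lra) Hi0). lra. }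
   assert (HE0: E 0).
   { split; [lra|]. intros u i Hu Hi. replace u with 0 by lra. specialize (H0 i Hi). lra. }
   destruct (completeness E HbE (ex_intro _ 0 HE0)) as [T [HT1 HT2]].
   assert (C1: forall u i, 0 <= u < T -> (i<N)%nat -> g i u - eps*u < K+eps).
   { intros u i Hu Hi. destruct (classic (exists s, E s /\ u < s)) as [[s [[_ Hs] Hus]]|Hno].
     apply Hs; auto; lra.
     assert (T <= u); [|lra]. apply HT2. intros s Hs. destruct (Rle_or_lt s u); auto.
     exfalso; apply Hno; exists s; auto. }
   assert (C2: 0 < T).
   { destruct (fin_delta N (fun i y => 0 <= y -> Rabs (g i y - g i 0) < eps)) as [d [Hdp Hd2]].
     { intros i Hi. destruct (Hrc i Hi eps He) as [d [Hdp Hd2]]. exists d; split; auto.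
       intros y Hy Hy0. apply Hd2. rewrite Rabs_right in Hy; lra. }
     assert (E (d/2)).
     { split; [lra|]. intros u i Hu Hi. assert (Rabs u < d) by (rewrite Rabs_right; lra).
       specialize (Hd2 i u Hi H ltac:(lra)). apply Rabs_def2 in Hd2. specialize (H0 i Hi).
       assert (0 <= eps * u) by (apply Rmult_le_pos; lra). lra. }
     specialize (HT1 _ H). lra. }
   assert (C3: exists i, (i<N)%nat /\ K + eps <= g i T - eps*T).
   { apply NNPP; intro Hn3.
     destruct (fin_delta N (fun i y => g i (T+y) - eps*(T+y) < K+eps)) as [d [Hdp Hd2]].
     { intros i Hi. assert (Hlt: g i T - eps*T < K+eps).
       { apply Rnot_le_lt; intro; apply Hn3; exists i; auto. }
       set (e' := (K + eps - (g i T - eps*T))/2).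
       destruct (derive_cont _ _ _ (Hd i T Hi C2) e' ltac:(unfold e'; lra)) as [d [Hdp Hd2]].
       exists (Rmin d (e'/eps)). split. apply Rmin_pos; auto. unfold e'; apply Rdiv_lt_0_compat; lra.
       intros y Hy. assert (Rabs y < d) by (eapply Rlt_le_trans; [apply Hy|apply Rmin_l]).
       assert (Rabs y < e'/eps) by (eapply Rlt_le_trans; [apply Hy|apply Rmin_r]).
       specialize (Hd2 (T+y) ltac:(replace (T+y-T) with y by ring; auto)).
       apply Rabs_def2 in Hd2. apply Rabs_def2 in H1.
       assert (eps * (- y) < e').
       { replace e' with (eps * (e'/eps)) by (field; lra). apply Rmult_lt_compat_l; lra. }
       unfold e' in *. lra. }
     assert (E (T + d/2)).
     { split; [lra|]. intros u i Hu Hi. destruct (Rlt_or_le u T). apply C1; auto; lra.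
       replace u with (T + (u - T)) by ring. apply Hd2; auto. rewrite Rabs_right; lra. }
     specialize (HT1 _ H). lra. }
   destruct C3 as [i [Hi Hgi]].
   assert (C4: forall j, (j<N)%nat -> g j T - eps*T <= K+eps).
   { intros j Hj. apply Rnot_lt_le; intro Hgt.
     set (e' := ((g j T - eps*T) - (K+eps))/2).
     destruct (derive_cont _ _ _ (Hd j T Hj C2) e' ltac:(unfold e'; lra)) as [d [Hdp Hd2]].
     set (y := - Rmin d T / 2).
     assert (Hm: 0 < Rmin d T) by (apply Rmin_pos; auto).
     pose proof (Rmin_l d T). pose proof (Rmin_r d T).
     specialize (Hd2 (T+y) ltac:(replace (T+y-T) with y by ring; unfold y; rewrite Rabs_left; lra)).
     apply Rabs_def2 in Hd2.
     specialize (C1 (T+y) j ltac:(unfold y; lra) Hj).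
     assert (0 <= eps * (-y)) by (apply Rmult_le_pos; unfold y; lra).
     unfold e' in *. lra. }
   assert (Hmax: forall j, (j<N)%nat -> g j T <= g i T).
   { intros j Hj. specialize (C4 j Hj). lra. }
   assert (HcT: c <= g i T).
   { assert (0 <= eps*T) by (apply Rmult_le_pos; lra). lra. }
   specialize (Hcond i T Hi C2 HcT Hmax).
   assert (eps <= g' i T).
   { apply (deriv_left (g i) T (g' i T) eps T). apply is_derive_Reals; apply Hd; auto. auto.
     intros t Ht. specialize (C1 t i ltac:(lra) Hi). specialize (C4 i Hi). lra. }
   lra. }
 intros i t Hi Ht. apply Rnot_lt_le; intro Hlt.
 set (e := (g i t - K) / (2 * (1 + t))).
 assert (He: 0 < e) by (unfold e; apply Rdiv_lt_0_compat; lra).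
 specialize (Heps e He i t Hi Ht).
 assert (e * (1 + t) = (g i t - K)/2) by (unfold e; field; lra).
 lra.
Qed.


Definition Fr := within (fun t : R => 0 <= t) (locally 0).
Definition Rc (f : R -> R) := filterlim f Fr (locally (f 0)).
Lemma rc_to f : right_cont_at0 f -> Rc f.
Proof. intros H. apply filterlim_locally. intros eps.
 destruct (H eps (cond_pos eps)) as [d [Hd Hd2]]. exists (mkposreal d Hd).
 intros y Hy Hy0. change (Rabs (y - 0) < d) in Hy. change (Rabs (f y - f 0) < eps).
 apply Hd2. rewrite Rminus_0_r, Rabs_right in Hy; lra. Qed.
Lemma rc_from f : Rc f -> right_cont_at0 f.
Proof. intros H eps He. apply filterlim_locally with (eps := mkposreal eps He) in H.
 destruct H as [d Hd]. exists d. split. apply cond_pos. intros t Ht.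
 apply (Hd t). change (Rabs (t - 0) < d). rewrite Rminus_0_r, Rabs_right; lra. lra. Qed.
Lemma rc_plus f g : Rc f -> Rc g -> Rc (fun t => f t + g t).
Proof. intros Hf Hg. unfold Rc.
 apply (filterlim_comp_2 f g Rplus Hf Hg). apply (filterlim_plus (f 0) (g 0)). Qed.
Lemma rc_mult f g : Rc f -> Rc g -> Rc (fun t => f t * g t).
Proof. intros Hf Hg. unfold Rc.
 apply (filterlim_comp_2 f g Rmult Hf Hg). apply (@filterlim_mult R_AbsRing (f 0) (g 0)). Qed.
Lemma rc_sumN n (F : nat -> R -> R) : (forall k, (k < n)%nat -> Rc (F k)) ->
  Rc (fun t => sumN n (fun k => F k t)).
Proof. induction n; intros H; simpl. apply filterlim_const.
 apply rc_plus. apply IHn; intros; apply H; lia. apply H; lia. Qed.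

Lemma derive_sumN n (F F' : nat -> R -> R) t : (forall k, (k < n)%nat -> is_derive (F k) t (F' k t)) ->
  is_derive (fun s => sumN n (fun k => F k s)) t (sumN n (fun k => F' k t)).
Proof. induction n; intros H; simpl. apply (@is_derive_const R_AbsRing R_NormedModule).
 apply (is_derive_plus (fun s => sumN n (fun k => F k s)) (F n)). apply IHn; intros; apply H; lia. apply H; lia. Qed.
Lemma derive_sq f t l : is_derive f t l -> is_derive (fun s => f s ^ 2) t (2 * f t * l).
Proof. intros H. assert (Hp := is_derive_pow f 2 t l H).
 replace (2*f t*l) with (INR 2 * l * f t ^ Init.Nat.pred 2) by (simpl; ring). exact Hp. Qed.


Lemma exp_le x y : x <= y -> exp x <= exp y.
Proof. intros [H|H]. left; apply exp_increasing; auto. subst; lra. Qed.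

Theorem mainTheorem4
  (N n : nat) (HN : (1 <= N)%nat) (Hn : (1 <= n)%nat)
  (m : nat -> R) (Hm : forall i, (i < N)%nat -> 0 < m i)
  (sigma p kappa : R) (Hsigma : 0 < sigma) (Hp : 0 < p) (Hkappa : 0 <= kappa)
  (phi : R -> R)
  (Hphi_smooth : forall (k : nat) (r : R), 0 <= r -> ex_derive_n phi k r)
  (Hphi_pos : forall r, 0 <= r -> 0 < phi r)
  (Hphi_noninc : forall r s, 0 <= r -> r <= s -> phi s <= phi r)
  (x v : nat -> nat -> R -> R) (theta : nat -> R -> R)
  (Htheta0 : forall i, (i < N)%nat -> 0 < theta i 0)
  (Hsol : CSF_solution N n m sigma p kappa phi x v theta) :
  exists C : R, forall i t, (i < N)%nat -> 0 <= t ->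
    vnorm n (fun k => v i k t) <= C.
Proof.
 destruct Hsol as [Hrc [Hrct [Hdx [Hdv Hdt]]]].
 set (Th := Rmax 1 (maxN N (fun i => theta i 0))).
 assert (HTh: 1 <= Th) by apply Rmax_l.
 assert (Ha: forall i j t, (j < N)%nat -> 0 <= m j * phi (vnorm n (fun l => x i l t - x j l t))).
 { intros i j t Hj. apply Rmult_le_pos. left; auto. left; apply Hphi_pos. apply sqrt_pos. }
 assert (Hth: forall i t, (i<N)%nat -> 0 <= t -> theta i t <= Th).
 { apply (maxp N theta (fun i t => kappa * sumN N (fun j => m j * phi (vnorm n (fun l => x i l t - x j l t))
                                  * (theta j t - theta i t))) Th Th).
   - exact Hrct.
   - intros i t Hi Ht. apply Hdt; auto.
   - intros i t Hi Ht _ Hmax. assert (sumN N (fun j => m j * phi (vnorm n (fun l => x i l t - x j l t))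
                                  * (theta j t - theta i t)) <= 0).
     { apply sumN_nonpos. intros j Hj. specialize (Ha i j t Hj). specialize (Hmax j Hj). nra. }
     nra.
   - lra.
   - intros i Hi. eapply Rle_trans; [apply (maxN_ge N (fun i => theta i 0) i Hi)|apply Rmax_r]. }
 set (c := exp (2/p * ln Th)).
 assert (Hc: 0 < c) by apply exp_pos.
 set (gv := fun i t => sumN n (fun k => v i k t ^ 2)).
 set (Kv := Rmax c (maxN N (fun i => gv i 0))).
 assert (Hg: forall i t, (i<N)%nat -> 0 <= t -> gv i t <= Kv).
 { apply (maxp N gv (fun i t => sumN n (fun k => 2 * v i k t *
      (sumN N (fun j => m j * phi (vnorm n (fun l => x i l t - x j l t)) * (v j k t - v i k t))
        + sigma * (theta i t - rpow (vnorm n (fun l => v i l t)) p) * v i k t))) c Kv).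
   - intros i Hi. apply rc_from. unfold gv. apply rc_sumN. intros k Hk.
     destruct (Hrc i k Hi Hk) as [_ Hv].
     exact (rc_mult _ _ (rc_to _ Hv) (rc_mult _ _ (rc_to _ Hv) (filterlim_const 1))).
   - intros i t Hi Ht. unfold gv. apply (derive_sumN n (fun k s => v i k s ^ 2)
       (fun k t => 2 * v i k t *
      (sumN N (fun j => m j * phi (vnorm n (fun l => x i l t - x j l t)) * (v j k t - v i k t))
        + sigma * (theta i t - rpow (vnorm n (fun l => v i l t)) p) * v i k t))).
     intros k Hk. apply derive_sq. apply Hdv; auto.
   - intros i t Hi Ht Hcg Hmax.
     set (a := fun j => m j * phi (vnorm n (fun l => x i l t - x j l t))).
     set (b := sigma * (theta i t - rpow (vnorm n (fun l => v i l t)) p)).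
     assert (E1: forall k, v i k t * sumN N (fun j => a j * (v j k t - v i k t)) =
                 sumN N (fun j => a j * (v i k t * (v j k t - v i k t)))).
     { intros k. rewrite <- sumN_scal. apply sumN_ext. intros; ring. }
     assert (E: sumN n (fun k => 2 * v i k t *
      (sumN N (fun j => a j * (v j k t - v i k t)) + b * v i k t))
      = 2 * sumN N (fun j => a j * sumN n (fun k => v i k t * (v j k t - v i k t))) + 2 * b * gv i t).
     { transitivity (sumN n (fun k => 2 * sumN N (fun j => a j * (v i k t * (v j k t - v i k t)))
                                      + (2 * b) * (v i k t ^ 2))).
       { apply sumN_ext. intros k Hk. rewrite <- E1. ring. }
       rewrite sumN_plus, sumN_scal, sumN_scal, sumN_swap. f_equal. f_equal.
       apply sumN_ext. intros j Hj. rewrite sumN_scal. reflexivity. }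
     apply (Rle_trans _ _ _ (Req_le _ _ E)).
     assert (P1: sumN N (fun j => a j * sumN n (fun k => v i k t * (v j k t - v i k t))) <= 0).
     { apply sumN_nonpos. intros j Hj.
       assert (sumN n (fun k => v i k t * (v j k t - v i k t)) <= 0).
       { eapply Rle_trans. apply (sumN_le n _ (fun k => /2 * v j k t ^ 2 + (-/2) * v i k t ^ 2)).
         intros k Hk. pose proof (pow2_ge_0 (v j k t - v i k t)). simpl in *. nra. rewrite sumN_plus, sumN_scal, sumN_scal.
         specialize (Hmax j Hj). unfold gv in Hmax. lra. }
       assert (0 <= a j) by (apply Ha; auto). nra. }
     assert (Hgpos: 0 < gv i t) by lra.
     assert (P2: b <= 0).
     { unfold b. assert (theta i t <= rpow (vnorm n (fun l => v i l t)) p); [|nra].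
       eapply Rle_trans. apply Hth; auto; lra.
       unfold rpow, vnorm. fold (gv i t).
       assert (Hs: 0 < sqrt (gv i t)) by (apply sqrt_lt_R0; auto).
       destruct (Rle_dec (sqrt (gv i t)) 0). lra.
       unfold Rpower. rewrite <- (exp_ln Th) at 1 by lra. apply exp_le.
       assert (Hl: ln (gv i t) = 2 * ln (sqrt (gv i t))).
       { rewrite <- (sqrt_sqrt (gv i t)) at 1 by lra. rewrite ln_mult by auto. ring. }
       assert (Hl2: ln c <= ln (gv i t)) by (apply ln_le; auto).
       unfold c in Hl2. rewrite ln_exp in Hl2.
       assert (p * (2 / p * ln Th) <= p * ln (gv i t)) by (apply Rmult_le_compat_l; lra).
       replace (p * (2 / p * ln Th)) with (2 * ln Th) in H by (field; lra). nra. }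
     nra.
   - apply Rmax_l.
   - intros i Hi. eapply Rle_trans; [apply (maxN_ge N (fun i => gv i 0) i Hi)|apply Rmax_r]. }
 exists (sqrt Kv). intros i t Hi Ht. unfold vnorm. apply sqrt_le_1_alt. apply Hg; auto.
Qed.
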